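(* (1) Suppose $\psi(x)\ge c_0x$ on $[0,1]$ for some $c_0>0$. If $(x_N,x_T)\in\mathbb C^2$ with $|x_N|\le\min(1,c_0)|x_T|$, then for every $\delta\in(0,\delta_0]$, \[ |x_T|\le\kappa_{G_\psi}(p_\delta;(x_N,x_T))\le\max\left(1,\frac{|x_N|}{|x_T|}\cdot\frac{1}{1-\delta}\right)|x_T|. \] (2) Suppose $\frac{\psi(x)}{x}$ is a strictly increasing function on $(0,1)$, and let $\delta^*$ be the unique solution of $1-\delta=\frac{\delta}{\psi^{-1}(\delta)}$. If $0<\delta\le\delta^*$ and $|x_N|\le\min\left(1,\frac{\delta}{\psi^{-1}(\delta)}\right)|x_T|$, then $\kappa_{G_\psi}(p_\delta;(x_N,x_T))=|x_T|$.
   Context: $\mathbb D$ is the unit disc in $\mathbb C$. $\psi:[0,1]\to[0,\infty)$ is continuous with $\psi(0)=0$, $\psi(1)>0$, and $G_\psi:=\{z\in\mathbb D^2:\Re z_1<\psi(|z_2|)\}$. For $\delta\in(0,1)$, $p_\delta:=(-\delta,0)$. Standing assumption: $\delta\in(0,\delta_0]$ for a fixed $\delta_0<1$; $\psi^{-1}$ is the inverse of $\psi$ (defined where used). The Kobayashi–Royden metric of a domain $\Omega\subset\mathbb C^d$ is $\kappa_\Omega(z;X)=\inf\{\lambda^{-1}:\lambda>0,\ \exists\varphi:\mathbb D\to\Omega \text{ holomorphic},\ \varphi(0)=z,\ \varphi'(0)=\lambda X\}$. *)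

(* Defs.v *)
From Stdlib Require Import Reals Lra.
From Coquelicot Require Import Coquelicot.
Open Scope R_scope.

Definition in_disc (z : C) : Prop := Cmod z < 1.

Definition G_psi (psi : R -> R) (z : C * C) : Prop :=
  in_disc (fst z) /\ in_disc (snd z) /\ Re (fst z) < psi (Cmod (snd z)).

Definition holo_disc (phi : C -> C * C) : Prop :=
  forall z : C, in_disc z ->
    @ex_derive C_AbsRing C_NormedModule (fun w => fst (phi w)) z /\
    @ex_derive C_AbsRing C_NormedModule (fun w => snd (phi w)) z.

(* Kobayashi--Royden metric of a domain Omega in C^2 at z in direction X:
   inf { 1/lam : lam > 0, exists phi : D -> Omega holomorphic,
         phi (RtoC 0) = z, phi'(0) = lam X }  (inf of the empty set is +oo). *)
Definition kobayashi (Omega : C * C -> Prop) (z X : C * C) : Rbar :=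
  Glb_Rbar (fun r : R => exists lam : R, 0 < lam /\ r = / lam /\
    exists phi : C -> C * C,
      holo_disc phi /\
      (forall w, in_disc w -> Omega (phi w)) /\
      phi (RtoC 0) = z /\
      @is_derive C_AbsRing C_NormedModule (fun w => fst (phi w)) (RtoC 0)
         (Cmult (RtoC lam) (fst X)) /\
      @is_derive C_AbsRing C_NormedModule (fun w => snd (phi w)) (RtoC 0)
         (Cmult (RtoC lam) (snd X))).

Definition psi_admissible (psi : R -> R) : Prop :=
  (forall x, 0 <= x <= 1 -> 0 <= psi x) /\
  (forall x, 0 <= x <= 1 -> forall eps, 0 < eps -> exists d, 0 < d /\
      forall y, 0 <= y <= 1 -> Rabs (y - x) < d -> Rabs (psi y - psi x) < eps) /\
  psi 0 = 0 /\ 0 < psi 1.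

Definition p_delta (delta : R) : C * C := (RtoC (- delta), RtoC 0).

(* Main.v *)
Require Import Defs.
From Stdlib Require Import Reals Lra Lia Arith.
From Coquelicot Require Import Coquelicot.
Open Scope R_scope.


Definition CInt (f : R -> C) (a b : R) : C := @RInt C_R_CompleteNormedModule f a b.
Definition CexR (f : R -> C) (a b : R) : Prop := @ex_RInt C_R_CompleteNormedModule f a b.

Lemma normC_Cmod (a : C_R_CompleteNormedModule) : norm a = Cmod a.
Proof.
  destruct a as [r r0]. unfold norm; simpl. unfold prod_norm, Cmod. simpl.
  change (norm r) with (Rabs r). change (norm r0) with (Rabs r0).
  rewrite !Rmult_1_r, <- !Rabs_mult, !Rabs_right; try reflexivity; nra.
Qed.

Lemma CInt_norm_le (f : R -> C) a b M : a <= b -> CexR f a b ->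
  (forall x, a <= x <= b -> Cmod (f x) <= M) -> Cmod (CInt f a b) <= M * (b - a).
Proof.
  intros Hab Hf HM. rewrite <- normC_Cmod.
  replace (M * (b - a)) with (scal (b - a) M) by (unfold scal; simpl; unfold mult; simpl; ring).
  apply (norm_RInt_le f (fun _ => M) a b (CInt f a b) (scal (b - a) M)); auto.
  - intros x Hx. rewrite normC_Cmod. auto.
  - apply (@RInt_correct C_R_CompleteNormedModule). exact Hf.
  - apply (@is_RInt_const R_NormedModule).
Qed.

Lemma deriv_eps (g : C -> C) z l : @is_derive C_AbsRing C_NormedModule g z l ->
  forall eps, 0 < eps -> exists d, 0 < d /\ forall w, Cmod (w - z) < d ->
    Cmod (g w - g z - l * (w - z)) <= eps * Cmod (w - z).
Proof.
  intros [_ H] eps Heps.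
  assert (Hl : is_filter_lim (locally z) z) by (intros P HP; exact HP).
  destruct (H z Hl (mkposreal eps Heps)) as [e He].
  exists e. split. apply cond_pos. intros w Hw.
  specialize (He w Hw). simpl in He.
  rewrite (Cmult_comm l). exact He.
Qed.

Lemma eps_deriv (g : C -> C) z l :
  (forall eps, 0 < eps -> exists d, 0 < d /\ forall w, Cmod (w - z) < d ->
    Cmod (g w - g z - l * (w - z)) <= eps * Cmod (w - z)) ->
  @is_derive C_AbsRing C_NormedModule g z l.
Proof.
  intros H. split. apply is_linear_scal_l.
  intros x Hx. apply (@is_filter_lim_locally_unique C_AbsRing (AbsRing_NormedModule C_AbsRing)) in Hx. subst x.
  intros eps. destruct (H eps (cond_pos eps)) as [d [Hd Hw]].
  exists (mkposreal _ Hd). intros y Hy.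
  specialize (Hw y Hy). simpl. rewrite (Cmult_comm _ l). exact Hw.
Qed.

Lemma is_derive_Cinv (z : C) : z <> 0 ->
  @is_derive C_AbsRing C_NormedModule (fun w => / w)%C z (- (/ z * / z))%C.
Proof.
  intros Hz. apply eps_deriv. intros eps Heps.
  assert (Hmz : 0 < Cmod z) by (apply Cmod_gt_0; auto).
  exists (Rmin (Cmod z / 2) (eps * Cmod z ^ 3 / 2)). split.
  { apply Rmin_glb_lt; [lra|]. apply Rmult_lt_0_compat; [|lra]. apply Rmult_lt_0_compat; auto. apply pow_lt; auto. }
  intros w Hw.
  assert (H1 : Cmod (w - z) < Cmod z / 2) by (eapply Rlt_le_trans; [exact Hw| apply Rmin_l]).
  assert (H2 : Cmod (w - z) < eps * Cmod z ^ 3 / 2) by (eapply Rlt_le_trans; [exact Hw| apply Rmin_r]).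
  assert (Hwm : Cmod z / 2 <= Cmod w).
  { assert (Cmod z <= Cmod w + Cmod (z - w)).
    { replace z with (w + (z - w))%C at 1 by ring. apply Cmod_triangle. }
    replace (z - w)%C with (- (w - z))%C in H by ring. rewrite Cmod_opp in H. lra. }
  assert (Hw0 : w <> 0) by (intro E; subst w; rewrite Cmod_0 in Hwm; lra).
  replace (/ w - / z - - (/ z * / z) * (w - z))%C with ((w - z) * (w - z) * / (w * z * z))%C
    by (field; auto).
  rewrite !Cmod_mult, Cmod_inv, !Cmod_mult.
  2:{ repeat apply Cmult_neq_0; auto. }
  set (r := Cmod (w - z)). assert (0 <= r) by apply Cmod_ge_0.
  assert (Hp : 0 < Cmod w * Cmod z * Cmod z) by (apply Rmult_lt_0_compat; [apply Rmult_lt_0_compat|]; lra).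
  rewrite Rmult_assoc. rewrite (Rmult_comm eps r). apply Rmult_le_compat_l; auto.
  apply (Rmult_le_reg_r (Cmod w * Cmod z * Cmod z)); auto.
  rewrite Rmult_assoc, Rinv_l by lra. rewrite Rmult_1_r.
  assert (eps * (Cmod z / 2 * Cmod z * Cmod z) <= eps * (Cmod w * Cmod z * Cmod z)).
  { apply Rmult_le_compat_l; [lra|]. apply Rmult_le_compat_r; [lra|]. apply Rmult_le_compat_r; lra. }
  simpl in H2. unfold r. apply Rlt_le. eapply Rlt_le_trans; [exact H2|]. replace (eps * (Cmod z * (Cmod z * (Cmod z * 1))) / 2) with (eps * (Cmod z / 2 * Cmod z * Cmod z)) by field. exact H0.
Qed.

Lemma brA f (z l : C) : @is_derive C_AbsRing C_NormedModule f z l -> @is_derive C_AbsRing (AbsRing_NormedModule C_AbsRing) f z l.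
Proof. intros [H1 H2]. split.
- destruct H1 as [A B C]. split. exact A. exact B. destruct C as [M HM]. exists M. exact HM.
- intros x Hx eps. specialize (H2 x Hx eps). exact H2. Qed.
Lemma brB f (z l : C) : @is_derive C_AbsRing (AbsRing_NormedModule C_AbsRing) f z l -> @is_derive C_AbsRing C_NormedModule f z l.
Proof. intros [H1 H2]. split.
- destruct H1 as [A B C]. split. exact A. exact B. destruct C as [M HM]. exists M. exact HM.
- intros x Hx eps. specialize (H2 x Hx eps). exact H2. Qed.

Definition Cdiff (g : C -> C) (z : C) := @ex_derive C_AbsRing C_NormedModule g z.

Lemma Cdiff_const (k z : C) : Cdiff (fun _ => k) z.
Proof. exists (RtoC 0). apply eps_deriv. intros eps He. exists 1. split; [lra|]. intros w _.
  match goal with |- Cmod ?X <= _ => replace X with (RtoC 0) by (simpl; ring) end. rewrite Cmod_0.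
  apply Rmult_le_pos; [lra| apply Cmod_ge_0]. Qed.

Lemma Cdiff_id (z : C) : Cdiff (fun w => w) z.
Proof. exists (RtoC 1). apply eps_deriv. intros eps He. exists 1. split; [lra|]. intros w _.
  match goal with |- Cmod ?X <= _ => replace X with (RtoC 0) by (simpl; ring) end. rewrite Cmod_0.
  apply Rmult_le_pos; [lra| apply Cmod_ge_0]. Qed.

Lemma Cdiff_plus f g (z : C) : Cdiff f z -> Cdiff g z -> Cdiff (fun w => f w + g w)%C z.
Proof. intros [l1 H1] [l2 H2]. exists (plus l1 l2). exact (is_derive_plus f g z l1 l2 H1 H2). Qed.

Lemma Cdiff_minus f g (z : C) : Cdiff f z -> Cdiff g z -> Cdiff (fun w => f w - g w)%C z.
Proof. intros [l1 H1] [l2 H2]. exists (minus l1 l2). exact (is_derive_minus f g z l1 l2 H1 H2). Qed.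

Lemma Cdiff_mult f g (z : C) : Cdiff f z -> Cdiff g z -> Cdiff (fun w => f w * g w)%C z.
Proof. intros [l1 H1] [l2 H2]. eexists. apply brB. apply (@is_derive_mult C_AbsRing f g z l1 l2 (brA _ _ _ H1) (brA _ _ _ H2)).
  intros; apply Cmult_comm. Qed.

Lemma Cdiff_inv (z : C) : z <> 0 -> Cdiff (fun w => / w)%C z.
Proof. intros H. eexists. apply is_derive_Cinv; auto. Qed.

Lemma Cdiff_comp f g (z : C) : Cdiff g z -> Cdiff f (g z) -> Cdiff (fun w => f (g w)) z.
Proof. intros [l1 H1] [l2 H2]. eexists. exact (@is_derive_comp C_AbsRing C_NormedModule f g z l2 l1 H2 (brA _ _ _ H1)). Qed.

Lemma cont_hseg (c x : R) : @continuous R_UniformSpace (AbsRing_UniformSpace C_AbsRing) (fun t : R => ((t, c) : C)) x.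
Proof.
  apply filterlim_locally. intros eps. exists eps. intros y Hy.
  change (Cmod (minus ((y, c) : C) (x, c)) < eps). unfold minus, plus, opp; simpl.
  change (Cmod ((y - x)%R, (c - c)%R) < eps). replace (c - c) with 0 by ring.
  change (Cmod (RtoC (y - x)) < eps). rewrite Cmod_R. exact Hy.
Qed.

Lemma cont_vseg (c y : R) : @continuous R_UniformSpace (AbsRing_UniformSpace C_AbsRing) (fun t : R => ((c, t) : C)) y.
Proof.
  apply filterlim_locally. intros eps. exists eps. intros x Hx.
  change (Cmod (minus ((c, x) : C) (c, y)) < eps). unfold minus, plus, opp; simpl.
  change (Cmod ((c - c)%R, (x - y)%R) < eps). replace (c - c) with 0 by ring.
  unfold Cmod; simpl. replace (0 * (0 * 1) + (x - y) * ((x - y) * 1)) with ((x - y)²) by (unfold Rsqr; ring).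
  rewrite sqrt_Rsqr_abs. exact Hx.
Qed.

Lemma hseg_int g (c a b : R) : (forall x, Rmin a b <= x <= Rmax a b -> Cdiff g (x, c)) ->
  CexR (fun x => g (x, c)) a b.
Proof.
  intros H. apply ex_RInt_continuous. intros z Hz.
  apply (@continuous_comp R_UniformSpace (AbsRing_UniformSpace C_AbsRing) C_UniformSpace (fun t : R => ((t, c) : C)) g).
  apply cont_hseg. apply (@ex_derive_continuous C_AbsRing C_NormedModule). apply H; auto.
Qed.

Lemma vseg_int g (c a b : R) : (forall y, Rmin a b <= y <= Rmax a b -> Cdiff g (c, y)) ->
  CexR (fun y => g (c, y)) a b.
Proof.
  intros H. apply ex_RInt_continuous. intros z Hz.
  apply (@continuous_comp R_UniformSpace (AbsRing_UniformSpace C_AbsRing) C_UniformSpace (fun t : R => ((c, t) : C)) g).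
  apply cont_vseg. apply (@ex_derive_continuous C_AbsRing C_NormedModule). apply H; auto.
Qed.


Definition rint (g : C -> C) (a b c d : R) : C :=
  (CInt (fun x => g (x, c)) a b + Ci * CInt (fun y => g (b, y)) c d
   - CInt (fun x => g (x, d)) a b - Ci * CInt (fun y => g (a, y)) c d)%C.

Definition HR (g : C -> C) (a b c d : R) :=
  forall x y, a <= x <= b -> c <= y <= d -> Cdiff g (x, y).

Lemma CInt_Chasles f a b c : CexR f a b -> CexR f b c -> (CInt f a b + CInt f b c)%C = CInt f a c.
Proof. intros H1 H2. unfold CInt. rewrite <- (@RInt_Chasles C_R_CompleteNormedModule f a b c H1 H2). reflexivity. Qed.

Lemma CInt_minus f g a b : CexR f a b -> CexR g a b ->
  CInt (fun x => f x - g x)%C a b = (CInt f a b - CInt g a b)%C.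
Proof. intros H1 H2. unfold CInt. exact (@RInt_minus C_R_CompleteNormedModule f g a b H1 H2). Qed.

Lemma CInt_ext f g a b : (forall x, Rmin a b <= x <= Rmax a b -> f x = g x) -> CInt f a b = CInt g a b.
Proof. intros H. unfold CInt. apply (@RInt_ext C_R_CompleteNormedModule). intros x Hx. apply H; lra. Qed.

Lemma HR_h g a b c d y : HR g a b c d -> c <= y <= d -> forall a' b', a <= a' -> a' <= b' -> b' <= b ->
  CexR (fun x => g (x, y)) a' b'.
Proof. intros H Hy a' b' H1 H2 H3. apply hseg_int. intros x Hx.
  rewrite Rmin_left in Hx by lra. rewrite Rmax_right in Hx by lra. apply H; lra. Qed.

Lemma HR_v g a b c d x : HR g a b c d -> a <= x <= b -> forall c' d', c <= c' -> c' <= d' -> d' <= d ->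
  CexR (fun y => g (x, y)) c' d'.
Proof. intros H Hx c' d' H1 H2 H3. apply vseg_int. intros y Hy.
  rewrite Rmin_left in Hy by lra. rewrite Rmax_right in Hy by lra. apply H; lra. Qed.

Lemma rint_splitx g a m b c d : a <= m <= b -> c <= d -> HR g a b c d ->
  rint g a b c d = (rint g a m c d + rint g m b c d)%C.
Proof.
  intros Hm Hcd H. unfold rint.
  rewrite <- (CInt_Chasles (fun x => g (x, c)) a m b) by (eapply HR_h; eauto; lra).
  rewrite <- (CInt_Chasles (fun x => g (x, d)) a m b) by (eapply HR_h; eauto; lra).
  ring.
Qed.

Lemma rint_splity g a b c m d : a <= b -> c <= m <= d -> HR g a b c d ->
  rint g a b c d = (rint g a b c m + rint g a b m d)%C.
Proof.
  intros Hab Hm H. unfold rint.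
  rewrite <- (CInt_Chasles (fun y => g (b, y)) c m d) by (eapply HR_v; eauto; lra).
  rewrite <- (CInt_Chasles (fun y => g (a, y)) c m d) by (eapply HR_v; eauto; lra).
  ring.
Qed.

Lemma HR_sub g a b c d a' b' c' d' : HR g a b c d -> a <= a' -> b' <= b -> c <= c' -> d' <= d ->
  HR g a' b' c' d'.
Proof. intros H ? ? ? ? x y ? ?. apply H; lra. Qed.

Lemma rint_minus g1 g2 a b c d : a <= b -> c <= d -> HR g1 a b c d -> HR g2 a b c d ->
  rint (fun z => g1 z - g2 z)%C a b c d = (rint g1 a b c d - rint g2 a b c d)%C.
Proof.
  intros Hab Hcd H1 H2. unfold rint.
  rewrite (CInt_minus (fun x => g1 (x, c)) (fun x => g2 (x, c))) by (eapply HR_h; eauto; lra).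
  rewrite (CInt_minus (fun x => g1 (x, d)) (fun x => g2 (x, d))) by (eapply HR_h; eauto; lra).
  rewrite (CInt_minus (fun y => g1 (b, y)) (fun y => g2 (b, y))) by (eapply HR_v; eauto; lra).
  rewrite (CInt_minus (fun y => g1 (a, y)) (fun y => g2 (a, y))) by (eapply HR_v; eauto; lra).
  ring.
Qed.

Lemma rint_bound g a b c d M : a <= b -> c <= d -> HR g a b c d ->
  (forall x y, a <= x <= b -> c <= y <= d -> Cmod (g (x, y)) <= M) ->
  Cmod (rint g a b c d) <= 2 * M * (b - a) + 2 * M * (d - c).
Proof.
  intros Hab Hcd H HM. unfold rint.
  assert (E1 : Cmod (CInt (fun x => g (x, c)) a b) <= M * (b - a)).
  { apply CInt_norm_le; auto. eapply HR_h; eauto; lra. intros; apply HM; lra. }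
  assert (E2 : Cmod (CInt (fun x => g (x, d)) a b) <= M * (b - a)).
  { apply CInt_norm_le; auto. eapply HR_h; eauto; lra. intros; apply HM; lra. }
  assert (E3 : Cmod (CInt (fun y => g (b, y)) c d) <= M * (d - c)).
  { apply CInt_norm_le; auto. eapply HR_v; eauto; lra. intros; apply HM; lra. }
  assert (E4 : Cmod (CInt (fun y => g (a, y)) c d) <= M * (d - c)).
  { apply CInt_norm_le; auto. eapply HR_v; eauto; lra. intros; apply HM; lra. }
  set (I1 := CInt (fun x => g (x, c)) a b) in *.
  set (I2 := CInt (fun x => g (x, d)) a b) in *.
  set (I3 := CInt (fun y => g (b, y)) c d) in *.
  set (I4 := CInt (fun y => g (a, y)) c d) in *.
  replace (I1 + Ci * I3 - I2 - Ci * I4)%C with (I1 + Ci * I3 + (- I2) + (- (Ci * I4)))%C by ring.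
  eapply Rle_trans. apply Cmod_triangle.
  eapply Rle_trans. apply Rplus_le_compat_r. apply Cmod_triangle.
  eapply Rle_trans. apply Rplus_le_compat_r. apply Rplus_le_compat_r. apply Cmod_triangle.
  rewrite !Cmod_opp, !Cmod_mult, Cmod_Ci. lra.
Qed.


Lemma is_RInt_lin p q a b : is_RInt (fun x => p + q * x) a b (p * (b - a) + q * (b * b - a * a) / 2).
Proof.
  replace (p * (b - a) + q * (b * b - a * a) / 2) with
    (minus ((fun x => p * x + q * (x * x) / 2) b) ((fun x => p * x + q * (x * x) / 2) a))
    by (unfold minus, plus, opp; simpl; field).
  apply (@is_RInt_derive R_CompleteNormedModule (fun x => p * x + q * (x * x) / 2) (fun x => p + q * x)).
  - intros x _. auto_derive; auto. field.
  - intros x _. apply continuity_pt_filterlim. apply derivable_continuous_pt.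
    apply derivable_pt_plus. apply derivable_pt_const. apply derivable_pt_scal. apply derivable_pt_id.
Qed.

Lemma CInt_lin p q r s a b :
  CInt (fun x => ((p + q * x)%R, (r + s * x)%R)) a b =
  ((p * (b - a) + q * (b * b - a * a) / 2)%R, (r * (b - a) + s * (b * b - a * a) / 2)%R).
Proof.
  unfold CInt. apply (@is_RInt_unique C_R_CompleteNormedModule).
  apply (@is_RInt_fct_extend_pair R_NormedModule R_NormedModule); simpl; apply is_RInt_lin.
Qed.

Lemma rint_affine (k L : C) a b c d : rint (fun z => k + L * z)%C a b c d = 0%C.
Proof.
  destruct k as [k1 k2]. destruct L as [L1 L2]. unfold rint.
  rewrite (CInt_ext (fun x => (k1, k2) + (L1, L2) * (x, c))%C (fun x => ((k1 - L2 * c + L1 * x)%R, (k2 + L1 * c + L2 * x)%R)) a b)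
    by (intros; unfold Cplus, Cmult; simpl; f_equal; ring).
  rewrite (CInt_ext (fun x => (k1, k2) + (L1, L2) * (x, d))%C (fun x => ((k1 - L2 * d + L1 * x)%R, (k2 + L1 * d + L2 * x)%R)) a b)
    by (intros; unfold Cplus, Cmult; simpl; f_equal; ring).
  rewrite (CInt_ext (fun y => (k1, k2) + (L1, L2) * (b, y))%C (fun y => ((k1 + L1 * b + (- L2) * y)%R, (k2 + L2 * b + L1 * y)%R)) c d)
    by (intros; unfold Cplus, Cmult; simpl; f_equal; ring).
  rewrite (CInt_ext (fun y => (k1, k2) + (L1, L2) * (a, y))%C (fun y => ((k1 + L1 * a + (- L2) * y)%R, (k2 + L2 * a + L1 * y)%R)) c d)
    by (intros; unfold Cplus, Cmult; simpl; f_equal; ring).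
  rewrite !CInt_lin. unfold Cminus, Cplus, Cmult, Copp, Ci; simpl. apply injective_projections; simpl; field.
Qed.


Definition rect := (R * R * R * R)%type.
Definition ra (r : rect) := fst (fst (fst r)).
Definition rb (r : rect) := snd (fst (fst r)).
Definition rc (r : rect) := snd (fst r).
Definition rd (r : rect) := snd r.
Definition rintr g (r : rect) := rint g (ra r) (rb r) (rc r) (rd r).

Definition best2 g (r1 r2 : rect) : rect :=
  if Rle_dec (Cmod (rintr g r1)) (Cmod (rintr g r2)) then r2 else r1.

Definition step g (r : rect) : rect :=
  let a := ra r in let b := rb r in let c := rc r in let d := rd r in
  let m := (a + b) / 2 in let n := (c + d) / 2 in
  best2 g (best2 g (a, m, c, n) (m, b, c, n)) (best2 g (a, m, n, d) (m, b, n, d)).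

Lemma best2_ge g r1 r2 : Cmod (rintr g r1) <= Cmod (rintr g (best2 g r1 r2)) /\
  Cmod (rintr g r2) <= Cmod (rintr g (best2 g r1 r2)).
Proof. unfold best2. destruct (Rle_dec _ _); lra. Qed.

Lemma best2_P (P : rect -> Prop) g r1 r2 : P r1 -> P r2 -> P (best2 g r1 r2).
Proof. unfold best2. destruct (Rle_dec _ _); auto. Qed.

Definition Sub (r r' : rect) := ra r <= ra r' /\ rb r' <= rb r /\ rb r' - ra r' = (rb r - ra r) / 2 /\
  rc r <= rc r' /\ rd r' <= rd r /\ rd r' - rc r' = (rd r - rc r) / 2.

Lemma step_sub g r : ra r <= rb r -> rc r <= rd r -> Sub r (step g r).
Proof.
  intros H1 H2. unfold step.
  repeat apply best2_P; unfold Sub, ra, rb, rc, rd in *; simpl; lra.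
Qed.

Lemma Cmod_tri4 (x y z w : C) : Cmod (x + y + (z + w)) <= Cmod x + Cmod y + Cmod z + Cmod w.
Proof.
  eapply Rle_trans. apply Cmod_triangle.
  pose proof (Cmod_triangle x y). pose proof (Cmod_triangle z w). lra.
Qed.

Lemma step_ge g r : ra r <= rb r -> rc r <= rd r -> HR g (ra r) (rb r) (rc r) (rd r) ->
  Cmod (rintr g r) <= 4 * Cmod (rintr g (step g r)).
Proof.
  intros H1 H2 H. unfold step.
  set (a := ra r) in *. set (b := rb r) in *. set (c := rc r) in *. set (d := rd r) in *.
  set (m := (a + b) / 2). set (n := (c + d) / 2).
  assert (E : rintr g r = (rintr g (a, m, c, n) + rintr g (a, m, n, d) + (rintr g (m, b, c, n) + rintr g (m, b, n, d)))%C).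
  { unfold rintr; unfold ra, rb, rc, rd; simpl. fold (ra r) (rb r) (rc r) (rd r). fold a b c d.
    rewrite (rint_splitx g a m b c d) by (unfold m; lra || auto).
    rewrite (rint_splity g a m c n d) by (unfold m, n; try lra; eapply HR_sub; eauto; unfold m; lra).
    rewrite (rint_splity g m b c n d) by (unfold m, n; try lra; eapply HR_sub; eauto; unfold m; lra).
    reflexivity. }
  destruct (best2_ge g (a, m, c, n) (m, b, c, n)) as [A1 A2].
  destruct (best2_ge g (a, m, n, d) (m, b, n, d)) as [A3 A4].
  destruct (best2_ge g (best2 g (a, m, c, n) (m, b, c, n)) (best2 g (a, m, n, d) (m, b, n, d))) as [B1 B2].
  rewrite E.
  eapply Rle_trans. apply Cmod_tri4. lra.
Qed.


Definition sq g r0 n := Nat.iter n (step g) r0.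

Lemma sq_S g r0 n : sq g r0 (S n) = step g (sq g r0 n).
Proof. reflexivity. Qed.

Lemma sq_inv g r0 : ra r0 <= rb r0 -> rc r0 <= rd r0 -> HR g (ra r0) (rb r0) (rc r0) (rd r0) ->
  forall n, let r := sq g r0 n in
    ra r0 <= ra r /\ ra r <= rb r /\ rb r <= rb r0 /\
    rc r0 <= rc r /\ rc r <= rd r /\ rd r <= rd r0 /\
    rb r - ra r = (rb r0 - ra r0) * (/ 2) ^ n /\
    rd r - rc r = (rd r0 - rc r0) * (/ 2) ^ n /\
    Cmod (rintr g r0) * (/ 4) ^ n <= Cmod (rintr g r).
Proof.
  intros H1 H2 H n. induction n as [|n IH].
  - simpl. lra.
  - simpl in IH. rewrite sq_S. set (r := sq g r0 n) in *.
    destruct IH as (I1 & I2 & I3 & I4 & I5 & I6 & I7 & I8 & I9).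
    pose proof (step_sub g r I2 I5) as (S1 & S2 & S3 & S4 & S5 & S6).
    assert (HRr : HR g (ra r) (rb r) (rc r) (rd r)) by (eapply HR_sub; eauto).
    pose proof (step_ge g r I2 I5 HRr) as G.
    simpl. replace (/ 4 * (/ 4) ^ n) with ((/ 4) ^ n / 4) by field.
    rewrite S3, I7, S6, I8. repeat split; try lra.
Qed.

Lemma sq_mono g r0 : ra r0 <= rb r0 -> rc r0 <= rd r0 -> HR g (ra r0) (rb r0) (rc r0) (rd r0) ->
  forall m k, ra (sq g r0 m) <= ra (sq g r0 (k + m)) /\ rb (sq g r0 (k + m)) <= rb (sq g r0 m) /\
              rc (sq g r0 m) <= rc (sq g r0 (k + m)) /\ rd (sq g r0 (k + m)) <= rd (sq g r0 m).
Proof.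
  intros H1 H2 H m k. induction k as [|k IH].
  - simpl. lra.
  - change (S k + m)%nat with (S (k + m)). rewrite sq_S.
    destruct (sq_inv g r0 H1 H2 H (k + m)) as (I1 & I2 & I3 & I4 & I5 & I6 & _).
    pose proof (step_sub g (sq g r0 (k + m)) I2 I5) as (S1 & S2 & S3 & S4 & S5 & S6). lra.
Qed.

Lemma pow2_ge n : INR n <= 2 ^ n.
Proof.
  induction n. simpl; lra. rewrite S_INR. simpl.
  assert (1 <= 2 ^ n) by (apply pow_R1_Rle; lra). lra.
Qed.

Lemma small_n K d : 0 < d -> exists n : nat, K * (/ 2) ^ n < d.
Proof.
  intros Hd. destruct (INR_archimed d K Hd) as [n Hn]. exists n.
  pose proof (pow2_ge n). assert (0 < 2 ^ n) by (apply pow_lt; lra).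
  rewrite <- Rinv_pow by lra.
  apply (Rmult_lt_reg_r (2 ^ n)); auto. rewrite Rmult_assoc, Rinv_l by lra.
  assert (INR n * d <= 2 ^ n * d) by (apply Rmult_le_compat_r; lra). lra.
Qed.

Lemma Cmod_le_abs x y : Cmod (x, y) <= Rabs x + Rabs y.
Proof.
  unfold Cmod. simpl. rewrite <- (sqrt_Rsqr (Rabs x + Rabs y)) by (pose proof (Rabs_pos x); pose proof (Rabs_pos y); lra).
  apply sqrt_le_1_alt. unfold Rsqr.
  pose proof (Rabs_pos x). pose proof (Rabs_pos y).
  assert (x * x = Rabs x * Rabs x) by (rewrite <- Rabs_mult; rewrite Rabs_right; nra).
  assert (y * y = Rabs y * Rabs y) by (rewrite <- Rabs_mult; rewrite Rabs_right; nra).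
  nra.
Qed.


Theorem goursat g a b c d : a <= b -> c <= d -> HR g a b c d -> rint g a b c d = 0%C.
Proof.
  intros Hab Hcd H.
  set (r0 := (a, b, c, d) : rect).
  assert (H1 : ra r0 <= rb r0) by (unfold r0, ra, rb, rc, rd; simpl; lra).
  assert (H2 : rc r0 <= rd r0) by (unfold r0, ra, rb, rc, rd; simpl; lra).
  assert (H0 : HR g (ra r0) (rb r0) (rc r0) (rd r0)) by exact H.
  set (M := Cmod (rint g a b c d)).
  destruct (Req_dec M 0) as [HM|HM]. { apply Cmod_eq_0. exact HM. }
  assert (HMp : 0 < M) by (pose proof (Cmod_ge_0 (rint g a b c d)); unfold M in *; lra).
  exfalso.
  pose proof (sq_inv g r0 H1 H2 H0) as INV.
  pose proof (sq_mono g r0 H1 H2 H0) as MONO.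
  change (ra r0) with a in INV. change (rb r0) with b in INV.
  change (rc r0) with c in INV. change (rd r0) with d in INV.
  change (rintr g r0) with (rint g a b c d) in INV.
  assert (AB : forall m n, ra (sq g r0 m) <= rb (sq g r0 n)).
  { intros m n. destruct (le_lt_dec m n) as [L|L].
    - destruct (MONO m (n - m)%nat) as [M1 _]. replace (n - m + m)%nat with n in M1 by lia.
      destruct (INV n) as (_ & I2 & _). lra.
    - destruct (MONO n (m - n)%nat) as [_ [M2 _]]. replace (m - n + n)%nat with m in M2 by lia.
      destruct (INV m) as (_ & I2 & _). lra. }
  assert (CD : forall m n, rc (sq g r0 m) <= rd (sq g r0 n)).
  { intros m n. destruct (le_lt_dec m n) as [L|L].
    - destruct (MONO m (n - m)%nat) as (_ & _ & M1 & _). replace (n - m + m)%nat with n in M1 by lia.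
      destruct (INV n) as (_ & _ & _ & _ & I5 & _). lra.
    - destruct (MONO n (m - n)%nat) as (_ & _ & _ & M2). replace (m - n + n)%nat with m in M2 by lia.
      destruct (INV m) as (_ & _ & _ & _ & I5 & _). lra. }
  destruct (completeness (fun x => exists n, x = ra (sq g r0 n))) as [xs [Xu Xl]].
  { exists b. intros x [n ->]. destruct (INV n) as (_ & I2 & I3 & _). lra. }
  { exists a. exists 0%nat. reflexivity. }
  destruct (completeness (fun y => exists n, y = rc (sq g r0 n))) as [ys [Yu Yl]].
  { exists d. intros y [n ->]. destruct (INV n) as (_ & _ & _ & _ & I5 & I6 & _). lra. }
  { exists c. exists 0%nat. reflexivity. }
  assert (XS : forall n, ra (sq g r0 n) <= xs <= rb (sq g r0 n)).
  { intros n. split. apply Xu. exists n; reflexivity. apply Xl. intros x [m ->]. apply AB. }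
  assert (YS : forall n, rc (sq g r0 n) <= ys <= rd (sq g r0 n)).
  { intros n. split. apply Yu. exists n; reflexivity. apply Yl. intros y [m ->]. apply CD. }
  assert (Hzs : Cdiff g (xs, ys)).
  { apply H. pose proof (XS 0%nat) as X0. pose proof (INV 0%nat) as J. simpl in X0, J. lra.
    pose proof (YS 0%nat) as X0. pose proof (INV 0%nat) as J. simpl in X0, J. lra. }
  destruct Hzs as [L HL].
  set (K := (b - a) + (d - c)).
  assert (HK : 0 <= K) by (unfold K; lra).
  set (e := M / (4 * K * K + 1)).
  assert (He : 0 < e) by (unfold e; apply Rdiv_lt_0_compat; nra).
  destruct (deriv_eps g (xs, ys) L HL e He) as [dl [Hdl HD]].
  destruct (small_n K dl Hdl) as [n Hn].
  destruct (INV n) as (I1 & I2 & I3 & I4 & I5 & I6 & I7 & I8 & I9).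
  set (r := sq g r0 n) in *.
  set (t := (/ 2) ^ n) in *.
  assert (Ht : 0 < t) by (unfold t; apply pow_lt; lra).
  simpl in I7, I8, I9.
  assert (HRr : HR g (ra r) (rb r) (rc r) (rd r)) by (eapply HR_sub; eauto).
  set (k := (g (xs, ys) - L * (xs, ys))%C).
  assert (Haff : HR (fun z => k + L * z)%C (ra r) (rb r) (rc r) (rd r)).
  { intros x y _ _. apply Cdiff_plus. apply Cdiff_const. apply Cdiff_mult. apply Cdiff_const. apply Cdiff_id. }
  assert (Eq : rintr g r = rint (fun z => g z - (k + L * z))%C (ra r) (rb r) (rc r) (rd r)).
  { rewrite rint_minus by (auto; lra). rewrite rint_affine. unfold rintr. ring. }
  assert (Bd : Cmod (rint (fun z => g z - (k + L * z))%C (ra r) (rb r) (rc r) (rd r))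
               <= 2 * (e * (K * t)) * (rb r - ra r) + 2 * (e * (K * t)) * (rd r - rc r)).
  { apply rint_bound; try lra.
    - intros x y Hx Hy. apply Cdiff_minus. apply HRr; auto. apply Haff; auto.
    - intros x y Hx Hy.
      pose proof (XS n) as Xn. pose proof (YS n) as Yn. fold r in Xn, Yn.
      assert (Dz : Cmod ((x, y) - (xs, ys))%C <= K * t).
      { replace ((x, y) - (xs, ys))%C with (((x - xs)%R, (y - ys)%R) : C)
          by (unfold Cminus, Cplus, Copp; simpl; f_equal; ring).
        eapply Rle_trans. apply Cmod_le_abs.
        assert (Rabs (x - xs) <= rb r - ra r) by (apply Rabs_le; lra).
        assert (Rabs (y - ys) <= rd r - rc r) by (apply Rabs_le; lra).
        unfold K. lra. }
      replace (g (x, y) - (k + L * (x, y)))%C with (g (x, y) - g (xs, ys) - L * ((x, y) - (xs, ys)))%C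
        by (unfold k; ring).
      eapply Rle_trans. apply HD. lra. apply Rmult_le_compat_l; lra. }
  rewrite <- Eq in Bd.
  assert (Q : (/ 4) ^ n = t * t) by (unfold t; rewrite <- Rpow_mult_distr; f_equal; field).
  rewrite Q in I9. fold M in I9.
  rewrite I7, I8 in Bd.
  assert (M * (t * t) <= 2 * e * K * K * (t * t)).
  { eapply Rle_trans. exact I9. eapply Rle_trans. exact Bd. simpl. unfold K. nra. }
  assert (M <= 2 * e * K * K) by (apply (Rmult_le_reg_r (t * t)); nra).
  assert (2 * e * K * K < M).
  { unfold e. replace (2 * (M / (4 * K * K + 1)) * K * K) with (M * (2 * K * K / (4 * K * K + 1))) by (field; nra).
    rewrite <- (Rmult_1_r M) at 2. apply Rmult_lt_compat_l; auto.
    apply (Rmult_lt_reg_r (4 * K * K + 1)). nra. unfold Rdiv. rewrite Rmult_assoc, Rinv_l by nra. nra. }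
  lra.
Qed.


Lemma im_le_Cmod x y : Rabs y <= Cmod (x, y).
Proof. unfold Cmod; simpl. rewrite <- sqrt_Rsqr_abs. apply sqrt_le_1_alt. unfold Rsqr. nra. Qed.
Lemma re_le_Cmod' x y : Rabs x <= Cmod (x, y).
Proof. unfold Cmod; simpl. rewrite <- sqrt_Rsqr_abs. apply sqrt_le_1_alt. unfold Rsqr. nra. Qed.

Lemma rint_splitx' g a m b c d :
  CexR (fun x => g (x, c)) a m -> CexR (fun x => g (x, c)) m b ->
  CexR (fun x => g (x, d)) a m -> CexR (fun x => g (x, d)) m b ->
  rint g a b c d = (rint g a m c d + rint g m b c d)%C.
Proof.
  intros J1 J2 J3 J4. unfold rint.
  rewrite <- (CInt_Chasles (fun x => g (x, c)) a m b) by auto.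
  rewrite <- (CInt_Chasles (fun x => g (x, d)) a m b) by auto.
  ring.
Qed.

Lemma rint_splity' g a b c m d :
  CexR (fun y => g (b, y)) c m -> CexR (fun y => g (b, y)) m d ->
  CexR (fun y => g (a, y)) c m -> CexR (fun y => g (a, y)) m d ->
  rint g a b c d = (rint g a b c m + rint g a b m d)%C.
Proof.
  intros J1 J2 J3 J4. unfold rint.
  rewrite <- (CInt_Chasles (fun y => g (b, y)) c m d) by auto.
  rewrite <- (CInt_Chasles (fun y => g (a, y)) c m d) by auto.
  ring.
Qed.

Lemma rint_bound' g a b c d M : a <= b -> c <= d ->
  CexR (fun x => g (x, c)) a b -> CexR (fun x => g (x, d)) a b ->
  CexR (fun y => g (b, y)) c d -> CexR (fun y => g (a, y)) c d ->
  (forall x, a <= x <= b -> Cmod (g (x, c)) <= M /\ Cmod (g (x, d)) <= M) ->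
  (forall y, c <= y <= d -> Cmod (g (a, y)) <= M /\ Cmod (g (b, y)) <= M) ->
  Cmod (rint g a b c d) <= 2 * M * (b - a) + 2 * M * (d - c).
Proof.
  intros Hab Hcd J1 J2 J3 J4 HM1 HM2. unfold rint.
  assert (E1 : Cmod (CInt (fun x => g (x, c)) a b) <= M * (b - a)).
  { apply CInt_norm_le; auto. intros; apply HM1; lra. }
  assert (E2 : Cmod (CInt (fun x => g (x, d)) a b) <= M * (b - a)).
  { apply CInt_norm_le; auto. intros; apply HM1; lra. }
  assert (E3 : Cmod (CInt (fun y => g (b, y)) c d) <= M * (d - c)).
  { apply CInt_norm_le; auto. intros; apply HM2; lra. }
  assert (E4 : Cmod (CInt (fun y => g (a, y)) c d) <= M * (d - c)).
  { apply CInt_norm_le; auto. intros; apply HM2; lra. }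
  set (I1 := CInt (fun x => g (x, c)) a b) in *.
  set (I2 := CInt (fun x => g (x, d)) a b) in *.
  set (I3 := CInt (fun y => g (b, y)) c d) in *.
  set (I4 := CInt (fun y => g (a, y)) c d) in *.
  replace (I1 + Ci * I3 - I2 - Ci * I4)%C with (I1 + Ci * I3 + (- I2 + (- (Ci * I4))))%C by ring.
  eapply Rle_trans. apply Cmod_tri4.
  rewrite !Cmod_opp, !Cmod_mult, Cmod_Ci. lra.
Qed.

Section Exc.
Variable g : C -> C.
Variable s : R.
Hypothesis Hs : 0 < s.
Hypothesis Hd : forall x y, -s <= x <= s -> -s <= y <= s -> ((x, y) : C) <> RtoC 0 -> Cdiff g (x, y).

Lemma hint y a b : y <> 0 -> -s <= a -> a <= b -> b <= s -> -s <= y <= s -> CexR (fun x => g (x, y)) a b.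
Proof. intros. apply hseg_int. intros x Hx. rewrite Rmin_left in Hx by lra. rewrite Rmax_right in Hx by lra.
  apply Hd; try lra. intros E. injection E. lra. Qed.

Lemma vint x a b : x <> 0 -> -s <= a -> a <= b -> b <= s -> -s <= x <= s -> CexR (fun y => g (x, y)) a b.
Proof. intros. apply vseg_int. intros y Hy. rewrite Rmin_left in Hy by lra. rewrite Rmax_right in Hy by lra.
  apply Hd; try lra. intros E. injection E. lra. Qed.

Lemma rint_exc_bound eps : 0 < eps < s ->
  Cmod (rint g (-s) s (-s) s) = Cmod (rint g (-eps) eps (-eps) eps).
Proof.
  intros He.
  rewrite (rint_splitx' g (-s) (-eps) s (-s) s) by (apply hint; lra).
  rewrite (rint_splitx' g (-eps) eps s (-s) s) by (apply hint; lra).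
  rewrite (goursat g (-s) (-eps) (-s) s) by (try lra; intros x y Hx Hy; apply Hd; try lra; intros E; injection E; lra).
  rewrite (goursat g eps s (-s) s) by (try lra; intros x y Hx Hy; apply Hd; try lra; intros E; injection E; lra).
  rewrite (rint_splity' g (-eps) eps (-s) (-eps) s) by (apply vint; lra).
  rewrite (rint_splity' g (-eps) eps (-eps) eps s) by (apply vint; lra).
  rewrite (goursat g (-eps) eps (-s) (-eps)) by (try lra; intros x y Hx Hy; apply Hd; try lra; intros E; injection E; lra).
  rewrite (goursat g (-eps) eps eps s) by (try lra; intros x y Hx Hy; apply Hd; try lra; intros E; injection E; lra).
  f_equal. ring.
Qed.

Hypothesis Hsmall : forall eta, 0 < eta -> exists dl, 0 < dl /\ forall z : C, z <> RtoC 0 -> Cmod z < dl -> Cmod (z * g z) <= eta.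

Lemma rint_exc : rint g (-s) s (-s) s = 0%C.
Proof.
  apply Cmod_eq_0. set (Q := Cmod (rint g (-s) s (-s) s)).
  destruct (Req_dec Q 0) as [E|E]; auto. exfalso.
  assert (HQ : 0 < Q) by (pose proof (Cmod_ge_0 (rint g (-s) s (-s) s)); unfold Q in *; lra).
  destruct (Hsmall (Q / 16)) as [dl [Hdl Hz]]; [lra|].
  set (eps := Rmin (s / 2) (dl / 4)).
  assert (He : 0 < eps < s) by (unfold eps; split; [apply Rmin_glb_lt; lra | pose proof (Rmin_l (s/2) (dl/4)); lra]).
  assert (He2 : eps <= dl / 4) by apply Rmin_r.
  assert (Bd : forall x y, (Rabs x = eps /\ Rabs y <= eps) \/ (Rabs y = eps /\ Rabs x <= eps) ->
            Cmod (g (x, y)) <= (Q / 16) / eps).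
  { intros x y Hxy.
    assert (Hm : eps <= Cmod (x, y)).
    { destruct Hxy as [[A _]|[A _]]; rewrite <- A; [apply re_le_Cmod' | apply im_le_Cmod]. }
    assert (HM : Cmod (x, y) < dl).
    { eapply Rle_lt_trans. apply Cmod_le_abs. destruct Hxy as [[A B]|[A B]]; lra. }
    assert (Hn : ((x, y) : C) <> RtoC 0) by (intros F; rewrite F, Cmod_0 in Hm; lra).
    specialize (Hz (x, y) Hn HM). rewrite Cmod_mult in Hz.
    apply (Rmult_le_reg_l eps); [lra|]. field_simplify; [|lra].
    eapply Rle_trans; [|exact Hz]. apply Rmult_le_compat_r; [apply Cmod_ge_0|lra]. }
  assert (B2 : Cmod (rint g (-eps) eps (-eps) eps) <= 2 * ((Q/16)/eps) * (eps - - eps) + 2 * ((Q/16)/eps) * (eps - - eps)).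
  { apply rint_bound'; try lra; [apply hint; lra | apply hint; lra | apply vint; lra | apply vint; lra | |].
    - intros x Hx. split; apply Bd; right; split; try (apply Rabs_le; lra).
      rewrite Rabs_left; lra. rewrite Rabs_right; lra.
    - intros y Hy. split; apply Bd; left; split; try (apply Rabs_le; lra).
      rewrite Rabs_left; lra. rewrite Rabs_right; lra. }
  rewrite <- rint_exc_bound in B2 by exact He. fold Q in B2.
  replace (2 * (Q / 16 / eps) * (eps - - eps) + 2 * (Q / 16 / eps) * (eps - - eps)) with (Q / 2) in B2 by (field; lra).
  lra.
Qed.
End Exc.


Lemma CInt_fst f a b : CexR f a b -> fst (CInt f a b) = RInt (fun x => fst (f x)) a b.
Proof. intros H. symmetry. apply is_RInt_unique.
  apply (@is_RInt_fct_extend_fst R_NormedModule R_NormedModule). apply (@RInt_correct C_R_CompleteNormedModule). exact H. Qed.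

Lemma CInt_snd f a b : CexR f a b -> snd (CInt f a b) = RInt (fun x => snd (f x)) a b.
Proof. intros H. symmetry. apply is_RInt_unique.
  apply (@is_RInt_fct_extend_snd R_NormedModule R_NormedModule). apply (@RInt_correct C_R_CompleteNormedModule). exact H. Qed.

Lemma CInt_plus f g a b : CexR f a b -> CexR g a b ->
  CInt (fun x => f x + g x)%C a b = (CInt f a b + CInt g a b)%C.
Proof. intros H1 H2. unfold CInt. exact (@RInt_plus C_R_CompleteNormedModule f g a b H1 H2). Qed.

Lemma CInt_scal (k : C) f a b : CexR f a b -> CInt (fun x => k * f x)%C a b = (k * CInt f a b)%C.
Proof.
  intros H. pose proof (@RInt_correct C_R_CompleteNormedModule f a b H) as Hl.
  change (is_RInt f a b (CInt f a b)) in Hl.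
  unfold CInt at 1. apply (@is_RInt_unique C_R_CompleteNormedModule).
  revert Hl. generalize (CInt f a b). intros [l1 l2] Hl.
  pose proof (@is_RInt_fct_extend_fst R_NormedModule R_NormedModule f a b _ Hl) as H1.
  pose proof (@is_RInt_fct_extend_snd R_NormedModule R_NormedModule f a b _ Hl) as H2.
  destruct k as [k1 k2]. simpl in H1, H2.
  replace ((k1, k2) * (l1, l2))%C with (((k1 * l1 - k2 * l2)%R, (k1 * l2 + k2 * l1)%R) : C)
    by (unfold Cmult; simpl; reflexivity).
  apply (@is_RInt_fct_extend_pair R_NormedModule R_NormedModule).
  - apply (is_RInt_ext (fun t => minus (scal k1 (fst (f t))) (scal k2 (snd (f t))))).
    { intros x _. unfold Cmult; simpl. reflexivity. }
    apply (@is_RInt_minus R_NormedModule); apply (@is_RInt_scal R_NormedModule); assumption.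
  - apply (is_RInt_ext (fun t => plus (scal k1 (snd (f t))) (scal k2 (fst (f t))))).
    { intros x _. unfold Cmult; simpl. change (scal k1 (snd (f x)) + scal k2 (fst (f x)) = k1 * snd (f x) + k2 * fst (f x)).
      reflexivity. }
    apply (@is_RInt_plus R_NormedModule); apply (@is_RInt_scal R_NormedModule); assumption.
Qed.

Definition Bd (P : C -> Prop) a b c d :=
  (forall x, a <= x <= b -> P (x, c) /\ P (x, d)) /\ (forall y, c <= y <= d -> P (a, y) /\ P (b, y)).

Lemma rint_ext g1 g2 a b c d : a <= b -> c <= d -> Bd (fun z => g1 z = g2 z) a b c d ->
  rint g1 a b c d = rint g2 a b c d.
Proof.
  intros Hab Hcd [B1 B2]. unfold rint.
  rewrite (CInt_ext (fun x => g1 (x, c)) (fun x => g2 (x, c)) a b)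
    by (intros x Hx; rewrite Rmin_left, Rmax_right in Hx by lra; apply B1; auto).
  rewrite (CInt_ext (fun x => g1 (x, d)) (fun x => g2 (x, d)) a b)
    by (intros x Hx; rewrite Rmin_left, Rmax_right in Hx by lra; apply B1; auto).
  rewrite (CInt_ext (fun y => g1 (b, y)) (fun y => g2 (b, y)) c d)
    by (intros x Hx; rewrite Rmin_left, Rmax_right in Hx by lra; apply B2; auto).
  rewrite (CInt_ext (fun y => g1 (a, y)) (fun y => g2 (a, y)) c d)
    by (intros x Hx; rewrite Rmin_left, Rmax_right in Hx by lra; apply B2; auto).
  reflexivity.
Qed.

Lemma Bd_h g a b c d y : a <= b -> c <= d -> (y = c \/ y = d) -> Bd (Cdiff g) a b c d -> CexR (fun x => g (x, y)) a b.
Proof. intros Hab Hcd Hy [B1 B2]. apply hseg_int. intros x Hx. rewrite Rmin_left, Rmax_right in Hx by lra.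
  destruct Hy as [->| ->]; apply B1; auto. Qed.

Lemma Bd_v g a b c d x : a <= b -> c <= d -> (x = a \/ x = b) -> Bd (Cdiff g) a b c d -> CexR (fun y => g (x, y)) c d.
Proof. intros Hab Hcd Hx [B1 B2]. apply vseg_int. intros y Hy. rewrite Rmin_left, Rmax_right in Hy by lra.
  destruct Hx as [->| ->]; apply B2; auto. Qed.

Lemma rint_lin g V (k : C) a b c d : a <= b -> c <= d -> Bd (Cdiff g) a b c d -> Bd (Cdiff V) a b c d ->
  rint (fun z => g z + k * V z)%C a b c d = (rint g a b c d + k * rint V a b c d)%C.
Proof.
  intros Hab Hcd Hg HV.
  assert (HkV : Bd (Cdiff (fun z => k * V z)%C) a b c d).
  { destruct HV as [B1 B2]. split.
    - intros x Hx. destruct (B1 x Hx). split; apply Cdiff_mult; auto; apply Cdiff_const.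
    - intros y Hy. destruct (B2 y Hy). split; apply Cdiff_mult; auto; apply Cdiff_const. }
  assert (G1 := Bd_h g a b c d c Hab Hcd (or_introl eq_refl) Hg).
  assert (G2 := Bd_h g a b c d d Hab Hcd (or_intror eq_refl) Hg).
  assert (G3 := Bd_v g a b c d b Hab Hcd (or_intror eq_refl) Hg).
  assert (G4 := Bd_v g a b c d a Hab Hcd (or_introl eq_refl) Hg).
  assert (V1 := Bd_h V a b c d c Hab Hcd (or_introl eq_refl) HV).
  assert (V2 := Bd_h V a b c d d Hab Hcd (or_intror eq_refl) HV).
  assert (V3 := Bd_v V a b c d b Hab Hcd (or_intror eq_refl) HV).
  assert (V4 := Bd_v V a b c d a Hab Hcd (or_introl eq_refl) HV).
  assert (W1 := Bd_h _ a b c d c Hab Hcd (or_introl eq_refl) HkV).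
  assert (W2 := Bd_h _ a b c d d Hab Hcd (or_intror eq_refl) HkV).
  assert (W3 := Bd_v _ a b c d b Hab Hcd (or_intror eq_refl) HkV).
  assert (W4 := Bd_v _ a b c d a Hab Hcd (or_introl eq_refl) HkV).
  simpl in W1, W2, W3, W4.
  unfold rint.
  rewrite (CInt_plus (fun x => g (x, c)) (fun x => k * V (x, c))%C a b G1 W1).
  rewrite (CInt_plus (fun x => g (x, d)) (fun x => k * V (x, d))%C a b G2 W2).
  rewrite (CInt_plus (fun y => g (b, y)) (fun y => k * V (b, y))%C c d G3 W3).
  rewrite (CInt_plus (fun y => g (a, y)) (fun y => k * V (a, y))%C c d G4 W4).
  rewrite (CInt_scal k (fun x => V (x, c)) a b V1).
  rewrite (CInt_scal k (fun x => V (x, d)) a b V2).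
  rewrite (CInt_scal k (fun y => V (b, y)) c d V3).
  rewrite (CInt_scal k (fun y => V (a, y)) c d V4).
  ring.
Qed.

Lemma in_sq x y : -(1/2) <= x <= 1/2 -> -(1/2) <= y <= 1/2 -> Cmod (x, y) < 1.
Proof. intros. unfold Cmod; simpl.
  assert (x * x <= 1/4) by nra. assert (y * y <= 1/4) by nra.
  assert (Hq : 0 <= x * (x * 1) + y * (y * 1) < 1) by nra.
  pose proof (sqrt_lt_1_alt _ 1 Hq) as Hs. rewrite sqrt_1 in Hs. exact Hs. Qed.

Lemma RInt_ge1 (f : R -> R) a b : a <= b -> ex_RInt f a b -> (forall x, a <= x <= b -> 1 <= f x) -> b - a <= RInt f a b.
Proof.
  intros Hab Hf H. replace (b - a) with (RInt (fun _ => 1) a b).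
  apply RInt_le; auto. apply ex_RInt_const. intros; apply H; lra.
  rewrite RInt_const. unfold scal; simpl; unfold mult; simpl. ring.
Qed.

Definition hs := 1/2.

Lemma Bd_inv : Bd (Cdiff (fun z => / z)%C) (-hs) hs (-hs) hs.
Proof.
  unfold hs. split.
  - intros x Hx. split; apply Cdiff_inv; intros E; injection E; lra.
  - intros y Hy. split; apply Cdiff_inv; intros E; injection E; lra.
Qed.



Lemma Ropp_RInt (f : R -> R) a b : ex_RInt f a b -> - RInt f a b = RInt (fun x => - f x) a b.
Proof. intros H. symmetry. exact (@RInt_opp R_CompleteNormedModule f a b H). Qed.

Lemma rint_inv_im : 4 <= snd (rint Cinv (-hs) hs (-hs) hs).
Proof.
  pose proof Bd_inv as HB.
  assert (Hh : - hs <= hs) by (unfold hs; lra).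
  assert (J1 : CexR (fun x => Cinv (x, (- hs)%R)) (-hs) hs) by exact (Bd_h _ _ _ _ _ _ Hh Hh (or_introl eq_refl) HB).
  assert (J2 : CexR (fun x => Cinv (x, hs)) (-hs) hs) by exact (Bd_h _ _ _ _ _ _ Hh Hh (or_intror eq_refl) HB).
  assert (J3 : CexR (fun y => Cinv (hs, y)) (-hs) hs) by exact (Bd_v _ _ _ _ _ _ Hh Hh (or_intror eq_refl) HB).
  assert (J4 : CexR (fun y => Cinv ((- hs)%R, y)) (-hs) hs) by exact (Bd_v _ _ _ _ _ _ Hh Hh (or_introl eq_refl) HB).
  unfold rint.
  assert (E : forall u v w t : C, snd (u + Ci * v - w - Ci * t)%C = snd u + fst v - snd w - fst t).
  { intros [u1 u2] [v1 v2] [w1 w2] [t1 t2]. unfold Cplus, Cminus, Cmult, Copp, Ci; simpl. ring. }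
  rewrite E. rewrite (CInt_snd _ _ _ J1), (CInt_snd _ _ _ J2), (CInt_fst _ _ _ J3), (CInt_fst _ _ _ J4).
  assert (K1 : 1 <= RInt (fun x => snd (Cinv (x, (- hs)%R))) (-hs) hs).
  { eapply Rle_trans; [|apply RInt_ge1]. unfold hs; lra. exact Hh.
    apply (@ex_RInt_fct_extend_snd R_NormedModule R_NormedModule). exact J1.
    intros x Hx. simpl. unfold hs in *.
    assert (0 < x * (x * 1) + - (1 / 2) * (- (1 / 2) * 1)) by nra.
    apply (Rmult_le_reg_r (x * (x * 1) + - (1 / 2) * (- (1 / 2) * 1))). lra.
    field_simplify; nra. }
  assert (K2 : 1 <= - RInt (fun x => snd (Cinv (x, hs))) (-hs) hs).
  { rewrite Ropp_RInt by (apply (@ex_RInt_fct_extend_snd R_NormedModule R_NormedModule); exact J2).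
    eapply Rle_trans; [|apply RInt_ge1]. unfold hs; lra. exact Hh.
    apply (@ex_RInt_opp R_NormedModule). apply (@ex_RInt_fct_extend_snd R_NormedModule R_NormedModule). exact J2.
    intros x Hx. simpl. unfold hs in *.
    assert (0 < x * (x * 1) + (1 / 2) * ((1 / 2) * 1)) by nra.
    apply (Rmult_le_reg_r (x * (x * 1) + (1 / 2) * ((1 / 2) * 1))). lra.
    field_simplify; nra. }
  assert (K3 : 1 <= RInt (fun y => fst (Cinv (hs, y))) (-hs) hs).
  { eapply Rle_trans; [|apply RInt_ge1]. unfold hs; lra. exact Hh.
    apply (@ex_RInt_fct_extend_fst R_NormedModule R_NormedModule). exact J3.
    intros x Hx. simpl. unfold hs in *.
    assert (0 < (1 / 2) * ((1 / 2) * 1) + x * (x * 1)) by nra.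
    apply (Rmult_le_reg_r ((1 / 2) * ((1 / 2) * 1) + x * (x * 1))). lra.
    field_simplify; nra. }
  assert (K4 : 1 <= - RInt (fun y => fst (Cinv ((- hs)%R, y))) (-hs) hs).
  { rewrite Ropp_RInt by (apply (@ex_RInt_fct_extend_fst R_NormedModule R_NormedModule); exact J4).
    eapply Rle_trans; [|apply RInt_ge1]. unfold hs; lra. exact Hh.
    apply (@ex_RInt_opp R_NormedModule). apply (@ex_RInt_fct_extend_fst R_NormedModule R_NormedModule). exact J4.
    intros x Hx. simpl. unfold hs in *.
    assert (0 < - (1 / 2) * (- (1 / 2) * 1) + x * (x * 1)) by nra.
    apply (Rmult_le_reg_r (- (1 / 2) * (- (1 / 2) * 1) + x * (x * 1))). lra.
    field_simplify; nra. }
  lra.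
Qed.


Lemma cauchy_est (f : C -> C) (a : C) :
  (forall z, Cmod z < 1 -> Cdiff f z) -> (forall z, Cmod z < 1 -> Cmod (f z) < 1) ->
  f (RtoC 0) = RtoC 0 -> @is_derive C_AbsRing C_NormedModule f (RtoC 0) a -> Cmod a <= 4.
Proof.
  intros Hf Hb H0 Ha.
  set (g := fun z => ((f z - a * z) * (/ z * / z))%C).
  assert (Hh : 0 < hs) by (unfold hs; lra).
  assert (Hhh : - hs <= hs) by lra.
  assert (Hd : forall x y, - hs <= x <= hs -> - hs <= y <= hs -> ((x, y) : C) <> RtoC 0 -> Cdiff g (x, y)).
  { intros x y Hx Hy Hn. unfold g. apply Cdiff_mult. apply Cdiff_minus. apply Hf. apply in_sq; unfold hs in *; lra.
    apply Cdiff_mult. apply Cdiff_const. apply Cdiff_id.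
    apply Cdiff_mult; apply Cdiff_inv; auto. }
  assert (Hsmall : forall eta, 0 < eta -> exists dl, 0 < dl /\ forall z : C, z <> RtoC 0 -> Cmod z < dl -> Cmod (z * g z) <= eta).
  { intros eta He. destruct (deriv_eps f (RtoC 0) a Ha eta He) as [dl [Hdl HD]].
    exists dl. split; auto. intros z Hz Hzd.
    assert (Hm : 0 < Cmod z) by (apply Cmod_gt_0; auto).
    specialize (HD z). rewrite H0 in HD. replace (z - RtoC 0)%C with z in HD by ring.
    specialize (HD Hzd).
    unfold g. replace (z * ((f z - a * z) * (/ z * / z)))%C with ((f z - RtoC 0 - a * z) * / z)%C by (field; auto).
    rewrite Cmod_mult, Cmod_inv by auto.
    apply (Rmult_le_reg_r (Cmod z)); auto. rewrite Rmult_assoc, Rinv_l by lra. lra. }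
  assert (Hg0 : rint g (- hs) hs (- hs) hs = RtoC 0) by exact (rint_exc g hs Hh Hd Hsmall).
  set (F := fun z => (f z * (/ z * / z))%C).
  assert (Hnz : Bd (fun z => z <> RtoC 0) (- hs) hs (- hs) hs).
  { unfold hs; split; intros t Ht; split; intros Ez; injection Ez; lra. }
  assert (HBg : Bd (Cdiff g) (- hs) hs (- hs) hs).
  { destruct Hnz as [N1 N2]. split.
    - intros x Hx. destruct (N1 x Hx). split; apply Hd; auto; lra.
    - intros y Hy. destruct (N2 y Hy). split; apply Hd; auto; lra. }
  assert (EF : rint F (- hs) hs (- hs) hs = (rint g (- hs) hs (- hs) hs + a * rint Cinv (- hs) hs (- hs) hs)%C).
  { rewrite <- rint_lin; try lra; auto; [|apply Bd_inv].
    apply rint_ext; try lra. destruct Hnz as [N1 N2]. split.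
    - intros x Hx. destruct (N1 x Hx). unfold F, g. split; field; auto.
    - intros y Hy. destruct (N2 y Hy). unfold F, g. split; field; auto. }
  rewrite Hg0, Cplus_0_l in EF.
  assert (BF : Cmod (rint F (- hs) hs (- hs) hs) <= 2 * 4 * (hs - - hs) + 2 * 4 * (hs - - hs)).
  { assert (HBF : Bd (Cdiff F) (- hs) hs (- hs) hs).
    { destruct Hnz as [N1 N2]. unfold F. split.
      - intros x Hx. destruct (N1 x Hx). split; (apply Cdiff_mult; [apply Hf, in_sq; unfold hs in *; lra | apply Cdiff_mult; apply Cdiff_inv; auto]).
      - intros y Hy. destruct (N2 y Hy). split; (apply Cdiff_mult; [apply Hf, in_sq; unfold hs in *; lra | apply Cdiff_mult; apply Cdiff_inv; auto]). }
    assert (Hpt : forall x y, - hs <= x <= hs -> - hs <= y <= hs -> (Rabs x = hs \/ Rabs y = hs) -> Cmod (F (x, y)) <= 4).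
    { intros x y Hx Hy Hxy. unfold F.
      assert (Hm : hs <= Cmod (x, y)).
      { destruct Hxy as [A|A]; rewrite <- A; [apply re_le_Cmod' | apply im_le_Cmod]. }
      assert (Hn : ((x, y) : C) <> RtoC 0) by (intros Ez; rewrite Ez, Cmod_0 in Hm; lra).
      rewrite !Cmod_mult, Cmod_inv by auto.
      assert (Cmod (f (x, y)) < 1) by (apply Hb, in_sq; unfold hs in *; lra).
      assert (/ Cmod (x, y) <= 2).
      { replace 2 with (/ hs) by (unfold hs; field). apply Rinv_le_contravar; auto. }
      assert (0 <= / Cmod (x, y)) by (apply Rlt_le, Rinv_0_lt_compat; lra).
      pose proof (Cmod_ge_0 (f (x, y))). nra. }
    apply rint_bound'; try lra.
    - exact (Bd_h F (-hs) hs (-hs) hs (-hs) Hhh Hhh (or_introl eq_refl) HBF).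
    - exact (Bd_h F (-hs) hs (-hs) hs hs Hhh Hhh (or_intror eq_refl) HBF).
    - exact (Bd_v F (-hs) hs (-hs) hs hs Hhh Hhh (or_intror eq_refl) HBF).
    - exact (Bd_v F (-hs) hs (-hs) hs (-hs) Hhh Hhh (or_introl eq_refl) HBF).
    - intros x Hx. split; apply Hpt; try lra; right; [rewrite Rabs_left | rewrite Rabs_right]; lra.
    - intros y Hy. split; apply Hpt; try lra; left; [rewrite Rabs_left | rewrite Rabs_right]; lra. }
  rewrite EF, Cmod_mult in BF. unfold hs in BF.
  pose proof rint_inv_im as Him.
  assert (Hc : 4 <= Cmod (rint Cinv (- hs) hs (- hs) hs)).
  { destruct (rint Cinv (- hs) hs (- hs) hs) as [c1 c2]. simpl in Him.
    eapply Rle_trans; [|apply im_le_Cmod]. rewrite Rabs_right; lra. }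
  pose proof (Cmod_ge_0 a).
  assert (Cmod a * 4 <= Cmod a * Cmod (rint Cinv (- hs) hs (- hs) hs)) by (apply Rmult_le_compat_l; lra).
  unfold hs in *. lra.
Qed.


Lemma bernoulli x n : 1 <= x -> 1 + INR n * (x - 1) <= x ^ n.
Proof.
  intros Hx. induction n. simpl; lra. rewrite S_INR. simpl.
  assert (1 <= x ^ n) by (apply pow_R1_Rle; lra). nra.
Qed.

Lemma schwarz (f : C -> C) (a : C) :
  (forall z, Cmod z < 1 -> Cdiff f z) -> (forall z, Cmod z < 1 -> Cmod (f z) < 1) ->
  f (RtoC 0) = RtoC 0 -> @is_derive C_AbsRing C_NormedModule f (RtoC 0) a -> Cmod a <= 1.
Proof.
  intros Hf Hb H0 Ha.
  set (it := fun n (z : C) => Nat.iter n f z).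
  assert (Ib : forall n z, Cmod z < 1 -> Cmod (it n z) < 1).
  { induction n; intros z Hz; simpl; auto. }
  assert (I0 : forall n, it n (RtoC 0) = RtoC 0).
  { induction n; simpl; auto. change (f (it n (RtoC 0)) = RtoC 0). rewrite IHn. auto. }
  assert (Id : forall n z, Cmod z < 1 -> Cdiff (it n) z).
  { induction n; intros z Hz.
    - apply Cdiff_id.
    - apply (Cdiff_comp f (it n) z). apply IHn; auto. apply Hf. apply Ib; auto. }
  assert (Iv : forall n, @is_derive C_AbsRing C_NormedModule (it n) (RtoC 0) (a ^ n)%C).
  { induction n.
    - apply eps_deriv. intros eps He. exists 1. split; [lra|]. intros w _. simpl.
      match goal with |- Cmod ?X <= _ => replace X with (RtoC 0) by (simpl; ring) end.
      rewrite Cmod_0. apply Rmult_le_pos; [lra|apply Cmod_ge_0].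
    - assert (Hf' : @is_derive C_AbsRing C_NormedModule f (it n (RtoC 0)) a) by (rewrite I0; exact Ha).
      pose proof (@is_derive_comp C_AbsRing C_NormedModule f (it n) (RtoC 0) a (a ^ n)%C Hf' (brA _ _ _ IHn)) as K.
      replace (a ^ S n)%C with (scal (a ^ n)%C a) by (simpl; unfold scal; simpl; unfold mult; simpl; ring).
      exact K. }
  assert (B : forall n, Cmod a ^ n <= 4).
  { intros n. rewrite <- Cmod_pow. apply (cauchy_est (it n)); auto. }
  destruct (Rle_dec (Cmod a) 1) as [L|L]; auto. exfalso.
  destruct (INR_archimed (Cmod a - 1) 4) as [n Hn]; [lra|].
  pose proof (bernoulli (Cmod a) n ltac:(lra)). specialize (B n). lra.
Qed.


Lemma kob_lb psi delta xN xT :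
  Rbar_le (Finite (Cmod xT)) (kobayashi (G_psi psi) (p_delta delta) (xN, xT)).
Proof.
  unfold kobayashi. destruct (Glb_Rbar_correct (fun r : R => exists lam : R, 0 < lam /\ r = / lam /\
    exists phi : C -> C * C,
      holo_disc phi /\
      (forall w, in_disc w -> G_psi psi (phi w)) /\
      phi (RtoC 0) = p_delta delta /\
      @is_derive C_AbsRing C_NormedModule (fun w => fst (phi w)) (RtoC 0)
         (Cmult (RtoC lam) (fst (xN, xT))) /\
      @is_derive C_AbsRing C_NormedModule (fun w => snd (phi w)) (RtoC 0)
         (Cmult (RtoC lam) (snd (xN, xT))))) as [Hlb Hgl].
  apply Hgl. intros r [lam [Hlam [-> [phi [Hh [Hin [Hp [H1 H2]]]]]]]].
  simpl in H2. simpl.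
  assert (S : Cmod (RtoC lam * xT) <= 1).
  { apply (schwarz (fun w => snd (phi w))).
    - intros z Hz. apply (Hh z Hz).
    - intros z Hz. apply (Hin z Hz).
    - rewrite Hp. reflexivity.
    - exact H2. }
  rewrite Cmod_mult, Cmod_R, Rabs_right in S by lra.
  apply (Rmult_le_reg_l lam); auto. rewrite Rinv_r by lra. lra.
Qed.

Lemma kob_ub psi delta xN xT lam : 0 < lam ->
  (forall w, in_disc w -> G_psi psi ((RtoC (- delta) + RtoC lam * xN * w)%C, (RtoC lam * xT * w)%C)) ->
  Rbar_le (kobayashi (G_psi psi) (p_delta delta) (xN, xT)) (Finite (/ lam)).
Proof.
  intros Hlam HG. unfold kobayashi.
  match goal with |- Rbar_le (Glb_Rbar ?E) _ => destruct (Glb_Rbar_correct E) as [Hlb Hgl] end.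
  apply Hlb. exists lam. split; auto. split; auto.
  exists (fun w => ((RtoC (- delta) + RtoC lam * xN * w)%C, (RtoC lam * xT * w)%C)).
  split; [|split; [|split; [|split]]].
  - intros z Hz. simpl. split.
    + apply Cdiff_plus. apply Cdiff_const. apply Cdiff_mult. apply Cdiff_const. apply Cdiff_id.
    + apply Cdiff_mult. apply Cdiff_const. apply Cdiff_id.
  - exact HG.
  - unfold p_delta. f_equal; ring.
  - simpl. apply eps_deriv. intros eps He. exists 1. split; [lra|]. intros w _.
    match goal with |- Cmod ?X <= _ => replace X with (RtoC 0) by ring end.
    rewrite Cmod_0. apply Rmult_le_pos; [lra|apply Cmod_ge_0].
  - simpl. apply eps_deriv. intros eps He. exists 1. split; [lra|]. intros w _.
    match goal with |- Cmod ?X <= _ => replace X with (RtoC 0) by ring end.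
    rewrite Cmod_0. apply Rmult_le_pos; [lra|apply Cmod_ge_0].
Qed.

Lemma kob_le0 psi delta :
  (forall lam, 0 < lam -> Rbar_le (kobayashi (G_psi psi) (p_delta delta) (RtoC 0, RtoC 0)) (Finite (/ lam))) ->
  Rbar_le (kobayashi (G_psi psi) (p_delta delta) (RtoC 0, RtoC 0)) (Finite 0).
Proof.
  intros H. destruct (kobayashi (G_psi psi) (p_delta delta) (RtoC 0, RtoC 0)) as [k| |] eqn:Ek.
  - simpl. destruct (Rle_dec k 0) as [L|L]; auto. exfalso.
    assert (Hk : 0 < 2 / k) by (apply Rdiv_lt_0_compat; lra).
    specialize (H _ Hk). simpl in H. replace (/ (2 / k)) with (k / 2) in H by (field; lra). lra.
  - specialize (H 1 ltac:(lra)). simpl in H. contradiction.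
  - simpl. auto.
Qed.

Lemma geo psi delta xN xT lam : 0 < delta < 1 -> 0 < lam ->
  lam * Cmod xN <= 1 - delta -> lam * Cmod xT <= 1 ->
  (forall s, 0 <= s < 1 -> - delta + lam * Cmod xN * s < psi (lam * Cmod xT * s)) ->
  forall w, in_disc w -> G_psi psi ((RtoC (- delta) + RtoC lam * xN * w)%C, (RtoC lam * xT * w)%C).
Proof.
  intros Hd Hl H1 H2 H3 w Hw. unfold in_disc in Hw. unfold G_psi, in_disc. simpl.
  assert (Hw0 := Cmod_ge_0 w).
  assert (E1 : Cmod (RtoC lam * xN * w) = lam * Cmod xN * Cmod w).
  { rewrite !Cmod_mult, Cmod_R, Rabs_right by lra. ring. }
  assert (E2 : Cmod (RtoC lam * xT * w) = lam * Cmod xT * Cmod w).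
  { rewrite !Cmod_mult, Cmod_R, Rabs_right by lra. ring. }
  pose proof (Cmod_ge_0 xN). pose proof (Cmod_ge_0 xT).
  split; [|split].
  - eapply Rle_lt_trans. apply Cmod_triangle. rewrite Cmod_R, E1, Rabs_left by lra.
    assert (lam * Cmod xN * Cmod w <= (1 - delta) * Cmod w) by (apply Rmult_le_compat_r; lra).
    assert ((1 - delta) * Cmod w < 1 - delta) by nra. lra.
  - rewrite E2. assert (lam * Cmod xT * Cmod w <= 1 * Cmod w) by (apply Rmult_le_compat_r; lra). lra.
  - rewrite E2. specialize (H3 (Cmod w) (conj Hw0 Hw)).
    pose proof (re_le_Cmod (RtoC lam * xN * w)%C) as Hr. rewrite E1 in Hr.
    apply Rabs_le_between in Hr.
    simpl in Hr. lra.
Qed.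


Lemma key_ratio psi dstar ystar delta y :
  psi_admissible psi ->
  (forall x y, 0 < x -> x < y -> y < 1 -> psi x / x < psi y / y) ->
  0 < ystar <= 1 -> psi ystar = dstar -> 1 - dstar = dstar / ystar ->
  0 < delta -> delta <= dstar -> 0 < y <= 1 -> psi y = delta -> delta / y <= 1 - delta.
Proof.
  intros [Hpos [Hcont [H0 H1]]] Hm Hys Hpys Heq Hd Hdd Hy Hpy.
  assert (Dpos : 0 <= dstar) by (rewrite <- Hpys; apply Hpos; lra).
  assert (Dh : dstar <= 1 - dstar).
  { rewrite Heq. apply (Rmult_le_reg_r ystar); [lra|]. unfold Rdiv. rewrite Rmult_assoc, Rinv_l by lra. nra. }
  destruct (Req_dec y 1) as [Y1|Y1].
  { subst y. unfold Rdiv. rewrite Rinv_1. lra. }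
  assert (Yl : y < 1) by lra.
  destruct (Req_dec ystar 1) as [S1|S1].
  - subst ystar. unfold Rdiv in Heq. rewrite Rinv_1, Rmult_1_r in Heq.
    assert (Dv : dstar = 1/2) by lra.
    destruct (Rle_dec (delta / y) (1 - delta)) as [L|L]; auto. exfalso.
    set (Gv := delta / y) in *.
    assert (HG : 1/2 < Gv) by lra.
    set (eps := (Gv - 1/2) / 2).
    assert (He : 0 < eps) by (unfold eps; lra).
    destruct (Hcont 1 ltac:(lra) eps He) as [d [Hdp Hd1]].
    set (x := Rmax (Rmax ((1 + y) / 2) (1 - d / 2)) ((Gv + 1/2) / (2 * Gv))).
    assert (Hx1 : y < x).
    { unfold x. eapply Rlt_le_trans; [|apply Rmax_l]. eapply Rlt_le_trans; [|apply Rmax_l]. lra. }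
    assert (Q : (Gv + 1/2) / (2 * Gv) < 1).
    { apply (Rmult_lt_reg_r (2 * Gv)); [lra|]. unfold Rdiv. rewrite Rmult_assoc, Rinv_l by lra. lra. }
    assert (Hx2 : x < 1).
    { unfold x. apply Rmax_lub_lt; [apply Rmax_lub_lt|]; lra. }
    assert (Hx3 : 1 - d / 2 <= x) by (unfold x; eapply Rle_trans; [|apply Rmax_l]; apply Rmax_r).
    assert (Hx4 : (Gv + 1/2) / (2 * Gv) <= x) by (unfold x; apply Rmax_r).
    assert (XG : 1/2 + eps <= x * Gv).
    { unfold eps. apply (Rmult_le_compat_r Gv) in Hx4; [|lra].
      replace ((Gv + 1/2) / (2 * Gv) * Gv) with ((Gv + 1/2) / 2) in Hx4 by (field; lra). lra. }
    specialize (Hm y x ltac:(lra) Hx1 Hx2). rewrite Hpy in Hm. fold Gv in Hm.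
    assert (Px : x * Gv < psi x).
    { apply (Rmult_lt_compat_l x) in Hm; [|lra]. replace (x * (psi x / x)) with (psi x) in Hm by (field; lra). lra. }
    specialize (Hd1 x ltac:(lra)). rewrite Rabs_left in Hd1 by lra. specialize (Hd1 ltac:(lra)).
    rewrite Hpys, Dv in Hd1. apply Rabs_def2 in Hd1. lra.
  - assert (Sl : ystar < 1) by lra.
    destruct (Rtotal_order y ystar) as [L|[L|L]].
    + specialize (Hm y ystar ltac:(lra) L Sl). rewrite Hpy, Hpys, <- Heq in Hm. lra.
    + subst ystar. rewrite Hpy in Hpys. subst dstar. lra.
    + exfalso. specialize (Hm ystar y ltac:(lra) L Yl). rewrite Hpy, Hpys in Hm.
      assert (0 <= dstar / ystar) by (apply Rdiv_le_0_compat; lra).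
      apply (Rmult_lt_compat_l y) in Hm; [|lra].
      replace (y * (delta / y)) with delta in Hm by (field; lra).
      assert (HH : ystar * (dstar / ystar) <= y * (dstar / ystar)) by (apply Rmult_le_compat_r; lra).
      replace (ystar * (dstar / ystar)) with dstar in HH by (field; lra). lra.
Qed.

Lemma re_cond2 psi delta y r :
  psi_admissible psi ->
  (forall x y, 0 < x -> x < y -> y < 1 -> psi x / x < psi y / y) ->
  0 < delta -> 0 < y <= 1 -> psi y = delta -> 0 <= r <= delta / y ->
  forall s, 0 <= s < 1 -> - delta + r * s < psi s.
Proof.
  intros [Hpos _] Hm Hd Hy Hpy Hr s Hs.
  destruct (Rtotal_order s y) as [L|[L|L]].
  - assert (r * s <= delta / y * s) by (apply Rmult_le_compat_r; lra).
    assert (delta / y * s < delta).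
    { apply (Rmult_lt_reg_r y); [lra|]. replace (delta / y * s * y) with (delta * s) by (field; lra). nra. }
    pose proof (Hpos s ltac:(lra)). lra.
  - subst s. assert (HH : r * y <= delta / y * y) by (apply Rmult_le_compat_r; lra).
    replace (delta / y * y) with delta in HH by (field; lra). lra.
  - specialize (Hm y s ltac:(lra) L ltac:(lra)). rewrite Hpy in Hm.
    assert (r * s <= delta / y * s) by (apply Rmult_le_compat_r; lra).
    apply (Rmult_lt_compat_r s) in Hm; [|lra].
    replace (psi s / s * s) with (psi s) in Hm by (field; lra). lra.
Qed.


Lemma kob_zero psi delta : psi_admissible psi -> 0 < delta < 1 ->
  Rbar_le (kobayashi (G_psi psi) (p_delta delta) (RtoC 0, RtoC 0)) (Finite 0).
Proof.
  intros [Hpos [_ [H0 _]]] Hd. apply kob_le0. intros lam Hl. apply kob_ub; auto.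
  apply geo; auto; rewrite Cmod_0; try lra.
  intros s Hs. replace (lam * 0 * s) with 0 by ring. rewrite H0. lra.
Qed.

Theorem proposition2 (psi : R -> R) (delta0 : R) :
  psi_admissible psi -> delta0 < 1 ->
  (* (1) *)
  (forall c0 : R, 0 < c0 -> (forall x, 0 <= x <= 1 -> c0 * x <= psi x) ->
   forall xN xT : C, Cmod xN <= Rmin 1 c0 * Cmod xT ->
   forall delta : R, 0 < delta <= delta0 ->
     Rbar_le (Finite (Cmod xT)) (kobayashi (G_psi psi) (p_delta delta) (xN, xT)) /\
     Rbar_le (kobayashi (G_psi psi) (p_delta delta) (xN, xT))
       (Finite (Rmax 1 (Cmod xN / Cmod xT * (1 / (1 - delta))) * Cmod xT)))
  /\
  (* (2) *)
  ((forall x y, 0 < x -> x < y -> y < 1 -> psi x / x < psi y / y) ->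
   forall dstar : R,
     (* dstar solves 1 - d = d / psi^{-1}(d) ... *)
     (exists ystar, 0 < ystar <= 1 /\ psi ystar = dstar /\ 1 - dstar = dstar / ystar) ->
     (* ... and is the unique solution *)
     (forall d y, 0 < y <= 1 -> psi y = d -> 1 - d = d / y -> d = dstar) ->
   forall delta : R, 0 < delta <= delta0 -> delta <= dstar ->
   forall y : R, 0 < y <= 1 -> psi y = delta -> (* y = psi^{-1}(delta) *)
   forall xN xT : C, Cmod xN <= Rmin 1 (delta / y) * Cmod xT ->
     kobayashi (G_psi psi) (p_delta delta) (xN, xT) = Finite (Cmod xT)).
Proof.
  intros Hadm Hd0. split.
  - intros c0 Hc0 Hpsi xN xT HxN delta Hdel. split; [apply kob_lb|].
    pose proof (Cmod_ge_0 xN) as GN. pose proof (Cmod_ge_0 xT) as GT.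
    assert (Hm1 : Rmin 1 c0 <= c0) by apply Rmin_r.
    assert (Hm0 : 0 <= Rmin 1 c0) by (apply Rmin_glb; lra).
    destruct (Req_dec (Cmod xT) 0) as [Z|Z].
    + assert (ZN : Cmod xN = 0) by (rewrite Z in HxN; nra).
      apply Cmod_eq_0 in Z. apply Cmod_eq_0 in ZN. subst xN xT.
      rewrite Cmod_0, Rmult_0_r. apply kob_zero; auto. lra.
    + assert (Tp : 0 < Cmod xT) by lra.
      set (Bv := Rmax 1 (Cmod xN / Cmod xT * (1 / (1 - delta))) * Cmod xT).
      assert (B1 : Cmod xT <= Bv) by (unfold Bv; pose proof (Rmax_l 1 (Cmod xN / Cmod xT * (1 / (1 - delta)))); nra).
      assert (B2 : Cmod xN / (1 - delta) <= Bv).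
      { unfold Bv. pose proof (Rmax_r 1 (Cmod xN / Cmod xT * (1 / (1 - delta)))).
        replace (Cmod xN / (1 - delta)) with (Cmod xN / Cmod xT * (1 / (1 - delta)) * Cmod xT) by (field; lra).
        apply Rmult_le_compat_r; lra. }
      assert (Bp : 0 < Bv) by lra.
      replace Bv with (/ / Bv) by (field; lra).
      apply kob_ub. apply Rinv_0_lt_compat; lra.
      apply geo; try lra.
      * apply Rinv_0_lt_compat; lra.
      * apply (Rmult_le_reg_l Bv); auto. rewrite <- Rmult_assoc, Rinv_r, Rmult_1_l by lra.
        apply (Rmult_le_reg_r (/ (1 - delta))). apply Rinv_0_lt_compat; lra.
        replace ((1 - delta) * / (1 - delta)) with 1 by (field; lra).
        replace (Bv * (1 - delta) * / (1 - delta)) with Bv by (field; lra). unfold Rdiv in B2. lra.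
      * apply (Rmult_le_reg_l Bv); auto. rewrite <- Rmult_assoc, Rinv_r, Rmult_1_l by lra. lra.
      * intros s Hs. set (t := / Bv * Cmod xT * s).
        assert (Ht0 : 0 <= t) by (unfold t; apply Rmult_le_pos; [apply Rmult_le_pos|]; try lra; apply Rlt_le, Rinv_0_lt_compat; lra).
        assert (Ht1 : t < 1).
        { unfold t. assert (/ Bv * Cmod xT <= 1).
          { apply (Rmult_le_reg_l Bv); auto. rewrite <- Rmult_assoc, Rinv_r, Rmult_1_l by lra. lra. }
          assert (0 <= / Bv * Cmod xT) by (apply Rmult_le_pos; [apply Rlt_le, Rinv_0_lt_compat|]; lra). nra. }
        specialize (Hpsi t ltac:(lra)).
        assert (/ Bv * Cmod xN * s <= c0 * t).
        { unfold t. assert (Cmod xN <= c0 * Cmod xT) by nra.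
          assert (0 <= / Bv * s) by (apply Rmult_le_pos; [apply Rlt_le, Rinv_0_lt_compat|]; lra). nra. }
        lra.
  - intros Hmono dstar [ystar [Hys [Hpys Heq]]] Huniq delta Hdel Hdds y Hy Hpy xN xT HxN.
    assert (Hd1 : 0 < delta < 1) by lra.
    apply Rbar_le_antisym; [|apply kob_lb].
    pose proof (Cmod_ge_0 xN) as GN. pose proof (Cmod_ge_0 xT) as GT.
    assert (Hm1 : Rmin 1 (delta / y) <= delta / y) by apply Rmin_r.
    assert (Hdy : 0 < delta / y) by (apply Rdiv_lt_0_compat; lra).
    assert (Hm0 : 0 <= Rmin 1 (delta / y)) by (apply Rmin_glb; lra).
    destruct (Req_dec (Cmod xT) 0) as [Z|Z].
    + assert (ZN : Cmod xN = 0) by (rewrite Z in HxN; nra).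
      rewrite Z. apply Cmod_eq_0 in Z. apply Cmod_eq_0 in ZN. subst xN xT.
      apply kob_zero; auto.
    + assert (Tp : 0 < Cmod xT) by lra.
      assert (KR := key_ratio psi dstar ystar delta y Hadm Hmono Hys Hpys Heq ltac:(lra) Hdds Hy Hpy).
      set (r := Cmod xN / Cmod xT).
      assert (Hr : 0 <= r <= delta / y).
      { unfold r. split. apply Rdiv_le_0_compat; lra.
        apply (Rmult_le_reg_r (Cmod xT)); auto. replace (Cmod xN / Cmod xT * Cmod xT) with (Cmod xN) by (field; lra). nra. }
      replace (Finite (Cmod xT)) with (Finite (/ / Cmod xT)) by (f_equal; field; lra).
      apply kob_ub. apply Rinv_0_lt_compat; lra.
      apply geo; try lra.
      * apply Rinv_0_lt_compat; lra.
      * replace (/ Cmod xT * Cmod xN) with r by (unfold r; field; lra). lra.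
      * replace (/ Cmod xT * Cmod xT) with 1 by (field; lra). lra.
      * intros s Hs. replace (/ Cmod xT * Cmod xN * s) with (r * s) by (unfold r; field; lra).
        replace (/ Cmod xT * Cmod xT * s) with s by (field; lra).
        apply (re_cond2 psi delta y r Hadm Hmono); auto; lra.
Qed.
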